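(* Let $\mathbb{E}$ be a finitely complete category, $\Sigma$ a point-congruous class of split epimorphisms, and suppose $\mathbb{E}$ is a $\Sigma$-Mal'tsev category. Let reflexive graphs $(d_0,d_1\colon X_1\rightrightarrows X_0,s_0)$ and $(d_0',d_1'\colon X_1'\rightrightarrows X_0',s_0')$ be given, together with a split epimorphism of reflexive graphs, i.e. split epimorphisms $(g_1,t_1)\colon X_1\rightleftarrows X_1'$ and $(g_0,t_0)\colon X_0\rightleftarrows X_0'$ such that $g_1,g_0$ and $t_1,t_0$ each commute with $d_0$, $d_1$ and $s_0$. Suppose $(g_0,t_0)\in\Sigma$. If the square $g_0d_0=d_0'g_1$ is a pullback, then the square $g_0d_1=d_1'g_1$ is a pullback as well.
   Context: A split epimorphism is a pair $(f,s)$ with $fs=1$. A class $\Sigma$ of split epimorphisms is fibrational if it contains all split epimorphisms $(f,s)$ with $f$ invertible and is stable under pullback along any morphism; it is point-congruous if moreover the full subcategory $\Sigma(\mathbb{E})$ of the category $\mathrm{Pt}(\mathbb{E})$ of split epimorphisms (with commuting squares as morphisms) is closed under finite limits in $\mathrm{Pt}(\mathbb{E})$. A pair of morphisms with common codomain $Z$ is jointly extremally epic if it factors jointly through no non-invertible monomorphism into $Z$. $\mathbb{E}$ is $\Sigma$-Mal'tsev if for every split epimorphism $(f,s)\colon X\rightleftarrows Y$ in $\Sigma$ and every split epimorphism $(g,t)$ with $g\colon Y'\to Y$, letting $X'=Y'\times_YX$, $s'=(1_{Y'},sg)$, $\bar t=(tf,1_X)$, the pair $(s',\bar t)$ is jointly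 extremally epic. *)

(* Defs.v *)
From mathcomp Require Import ssreflect ssrfun ssrbool eqtype choice fintype.
From Stdlib Require Import ProofIrrelevance.

Set Implicit Arguments.
Unset Strict Implicit.
Unset Printing Implicit Defensive.

Record Category := {
  Ob :> Type;
  Hom : Ob -> Ob -> Type;
  idm : forall X, Hom X X;
  comp : forall X Y Z, Hom Y Z -> Hom X Y -> Hom X Z;
  comp_id_l : forall X Y (f : Hom X Y), comp (idm Y) f = f;
  comp_id_r : forall X Y (f : Hom X Y), comp f (idm X) = f;
  comp_assoc : forall X Y Z W (h : Hom Z W) (g : Hom Y Z) (f : Hom X Y),
      comp h (comp g f) = comp (comp h g) f
}.
Arguments Hom {c} _ _.
Arguments idm {c} _.
Arguments comp {c X Y Z} _ _.

Notation "g ∘ f" := (comp g f) (at level 40, left associativity).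

Section Basics.
Variable C : Category.

Definition is_iso (X Y : C) (f : Hom X Y) : Prop :=
  exists g : Hom Y X, g ∘ f = idm X /\ f ∘ g = idm Y.

Definition is_mono (M Z : C) (m : Hom M Z) : Prop :=
  forall (W : C) (u v : Hom W M), m ∘ u = m ∘ v -> u = v.

Definition is_pullback (A B Z P : C) (f : Hom A Z) (g : Hom B Z)
    (p1 : Hom P A) (p2 : Hom P B) : Prop :=
  f ∘ p1 = g ∘ p2 /\
  forall (Q : C) (q1 : Hom Q A) (q2 : Hom Q B), f ∘ q1 = g ∘ q2 ->
    exists u : Hom Q P, (p1 ∘ u = q1 /\ p2 ∘ u = q2) /\
      forall v : Hom Q P, p1 ∘ v = q1 -> p2 ∘ v = q2 -> v = u.

(** Finite diagrams: diagrams indexed by a finite graph (finite limits are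
    exactly limits of such diagrams). *)
Record FinDiagram := {
  dJ : finType;
  dE : finType;
  dsrc : dE -> dJ;
  dtgt : dE -> dJ;
  dob : dJ -> Ob C;
  dmap : forall e : dE, Hom (dob (dsrc e)) (dob (dtgt e))
}.

Arguments dob : clear implicits.
Arguments dmap : clear implicits.
Arguments dsrc : clear implicits.
Arguments dtgt : clear implicits.

Definition is_cone (D : FinDiagram) (L : C) (legs : forall j, Hom L (dob D j)) : Prop :=
  forall e : dE D, dmap D e ∘ legs (dsrc D e) = legs (dtgt D e).

Definition is_limit (D : FinDiagram) (L : C) (legs : forall j, Hom L (dob D j)) : Prop :=
  is_cone legs /\
  forall (M : C) (m : forall j, Hom M (dob D j)), is_cone m ->
    exists u : Hom M L, (forall j, legs j ∘ u = m j) /\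
      forall v : Hom M L, (forall j, legs j ∘ v = m j) -> v = u.

Definition finitely_complete : Prop :=
  forall D : FinDiagram, exists (L : C) (legs : forall j, Hom L (dob D j)),
    is_limit legs.

Definition closed_under_finite_limits (P : C -> Prop) : Prop :=
  forall (D : FinDiagram) (L : C) (legs : forall j, Hom L (dob D j)),
    (forall j, P (dob D j)) -> is_limit legs -> P L.

Definition jointly_extremally_epic (A B Z : C) (a : Hom A Z) (b : Hom B Z) : Prop :=
  forall (M : C) (m : Hom M Z) (a' : Hom A M) (b' : Hom B M),
    is_mono m -> m ∘ a' = a -> m ∘ b' = b -> is_iso m.

End Basics.

Record Point (C : Category) := {
  pt_dom : Ob C;
  pt_cod : Ob C;
  pt_f : Hom pt_dom pt_cod;
  pt_s : Hom pt_cod pt_dom;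
  pt_sec : pt_f ∘ pt_s = idm pt_cod
}.
Arguments pt_dom {C} _.
Arguments pt_cod {C} _.
Arguments pt_f {C} _.
Arguments pt_s {C} _.
Arguments pt_sec {C} _.
Arguments Build_Point {C pt_dom pt_cod} pt_f pt_s pt_sec.

Record PtHom (C : Category) (p q : Point C) := {
  ph_top : Hom (pt_dom p) (pt_dom q);
  ph_bot : Hom (pt_cod p) (pt_cod q);
  ph_f : pt_f q ∘ ph_top = ph_bot ∘ pt_f p;
  ph_s : ph_top ∘ pt_s p = pt_s q ∘ ph_bot
}.
Arguments ph_top {C p q} _.
Arguments ph_bot {C p q} _.

Section Pt.
Variable C : Category.

Lemma PtHom_eq (p q : Point C) (a b : PtHom p q) :
  ph_top a = ph_top b -> ph_bot a = ph_bot b -> a = b.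
Proof.
case: a => t1 b1 f1 s1; case: b => t2 b2 f2 s2 /= E1 E2.
subst t2 b2. by rewrite (proof_irrelevance _ f1 f2) (proof_irrelevance _ s1 s2).
Qed.

Definition Pt_id (p : Point C) : PtHom p p.
Proof.
refine (@Build_PtHom C p p (idm _) (idm _) _ _).
- by rewrite comp_id_l comp_id_r.
- by rewrite comp_id_l comp_id_r.
Defined.

Definition Pt_comp (p q r : Point C) (b : PtHom q r) (a : PtHom p q) : PtHom p r.
Proof.
refine (@Build_PtHom C p r (ph_top b ∘ ph_top a) (ph_bot b ∘ ph_bot a) _ _).
- by rewrite comp_assoc (ph_f b) -comp_assoc (ph_f a) comp_assoc.
- by rewrite -comp_assoc (ph_s a) comp_assoc (ph_s b) -comp_assoc.
Defined.

Definition Pt : Category.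
Proof.
refine (@Build_Category (Point C) (@PtHom C) Pt_id Pt_comp _ _ _).
- by move=> X Y f; apply: PtHom_eq => /=; rewrite comp_id_l.
- by move=> X Y f; apply: PtHom_eq => /=; rewrite comp_id_r.
- by move=> X Y Z W h g f; apply: PtHom_eq => /=; rewrite comp_assoc.
Defined.

Definition fibrational (S : Point C -> Prop) : Prop :=
  (forall p : Point C, is_iso (pt_f p) -> S p) /\
  (forall (p q : Point C) (h : Hom (pt_cod q) (pt_cod p)) (k : Hom (pt_dom q) (pt_dom p)),
      S p -> is_pullback h (pt_f p) (pt_f q) k -> k ∘ pt_s q = pt_s p ∘ h -> S q).

Definition point_congruous (S : Point C -> Prop) : Prop :=
  fibrational S /\ @closed_under_finite_limits Pt S.

Definition sigma_maltsev (S : Point C -> Prop) : Prop :=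
  forall p : Point C, S p ->
  forall (Y' : C) (g : Hom Y' (pt_cod p)) (t : Hom (pt_cod p) Y'), g ∘ t = idm _ ->
  forall (X' : C) (pi1 : Hom X' Y') (pi2 : Hom X' (pt_dom p)),
    is_pullback g (pt_f p) pi1 pi2 ->
  forall (s' : Hom Y' X') (tb : Hom (pt_dom p) X'),
    pi1 ∘ s' = idm Y' -> pi2 ∘ s' = pt_s p ∘ g ->
    pi1 ∘ tb = t ∘ pt_f p -> pi2 ∘ tb = idm (pt_dom p) ->
    jointly_extremally_epic s' tb.

End Pt.

(* Main.v *)
Require Import Defs.
From mathcomp Require Import ssreflect ssrfun ssrbool eqtype choice fintype.
Set Implicit Arguments.
Unset Strict Implicit.

Lemma rwA (C : Category) (X Y Y' Z W : C) (f : Hom Y Z) (g : Hom X Y) (h : Hom Y' Z) (k : Hom X Y') (x : Hom W X) :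
  f ∘ g = h ∘ k -> f ∘ (g ∘ x) = h ∘ (k ∘ x).
Proof. by move=> E; rewrite !comp_assoc E. Qed.

Lemma rwI (C : Category) (X Y W : C) (f : Hom Y X) (g : Hom X Y) (x : Hom W X) :
  f ∘ g = idm X -> f ∘ (g ∘ x) = x.
Proof. by move=> E; rewrite comp_assoc E comp_id_l. Qed.

Lemma pb_jm (C : Category) (A B Z P : C) (f : Hom A Z) (g : Hom B Z) (p1 : Hom P A) (p2 : Hom P B) :
  is_pullback f g p1 p2 -> forall W (x y : Hom W P), p1 ∘ x = p1 ∘ y -> p2 ∘ x = p2 ∘ y -> x = y.
Proof.
case=> Hc Hu W x y E1 E2.
have H : f ∘ (p1 ∘ x) = g ∘ (p2 ∘ x) by rewrite !comp_assoc Hc.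
case: (Hu W _ _ H) => u [_ Hun].
by rewrite (Hun x) // (Hun y).
Qed.

Lemma pb_sym (C : Category) (A B Z P : C) (f : Hom A Z) (g : Hom B Z) (p1 : Hom P A) (p2 : Hom P B) :
  is_pullback f g p1 p2 -> is_pullback g f p2 p1.
Proof.
case=> Hc Hu; split; first by [].
move=> Q q1 q2 E; case: (Hu Q q2 q1 (esym E)) => u [[E1 E2] Hun].
exists u; split; first by [].
by move=> v V1 V2; apply: Hun.
Qed.

Lemma pb_ex (C : Category) (Hfc : finitely_complete C) (A B Z : C) (f : Hom A Z) (g : Hom B Z) :
  exists (P : C) (p1 : Hom P A) (p2 : Hom P B), is_pullback f g p1 p2.
Proof.
pose ob := fun j : option bool => match j with None => Z | Some true => A | Some false => B end.
pose mp := fun e : bool => match e return Hom (ob (Some e)) (ob None) with true => f | false => g end.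
pose D := @Build_FinDiagram C (option bool) bool (fun e => Some e) (fun _ => None) ob mp.
case: (Hfc D) => L [legs [Hcone Huniv]].
exists L, (legs (Some true)), (legs (Some false)).
have h1 := Hcone true; have h2 := Hcone false; simpl in h1, h2.
split; first by rewrite h1 h2.
move=> Q q1 q2 E.
pose m := fun j : option bool => match j return Hom Q (ob j) with None => f ∘ q1 | Some true => q1 | Some false => q2 end.
have Hm : is_cone (D:=D) m by case=> //=.
case: (Huniv Q m Hm) => u [Hu Hun].
exists u; split; first by split; [apply: (Hu (Some true)) | apply: (Hu (Some false))].
move=> v V1 V2; apply: Hun; case=> [[]|] //=.
by rewrite -h1 -comp_assoc V1.
Qed.

Lemma eq_ex (C : Category) (Hfc : finitely_complete C) (A Z : C) (h1 h2 : Hom A Z) :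
  exists (E : C) (e : Hom E A), h1 ∘ e = h2 ∘ e /\ is_mono e /\
    forall Q (q : Hom Q A), h1 ∘ q = h2 ∘ q -> exists u, e ∘ u = q.
Proof.
pose ob := fun j : bool => if j then A else Z.
pose mp := fun e : bool => match e return Hom (ob true) (ob false) with true => h1 | false => h2 end.
pose D := @Build_FinDiagram C bool bool (fun _ => true) (fun _ => false) ob mp.
case: (Hfc D) => L [legs [Hcone Huniv]].
have k1 := Hcone true; have k2 := Hcone false; simpl in k1, k2.
exists L, (legs true); split; first by rewrite k1 k2.
split.
- move=> W x y Exy.
  pose m := fun j : bool => match j return Hom W (ob j) with true => legs true ∘ x | false => legs false ∘ x end.
  have Hm : is_cone (D:=D) m by case=> /=; rewrite comp_assoc ?k1 ?k2.
  case: (Huniv W m Hm) => u [_ Hun].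
  rewrite (Hun x); last by case.
  rewrite (Hun y) //; case=> //=.
  by rewrite -k1 -!comp_assoc Exy.
- move=> Q q Eq.
  pose m := fun j : bool => match j return Hom Q (ob j) with true => q | false => h1 ∘ q end.
  have Hm : is_cone (D:=D) m by case=> //=.
  case: (Huniv Q m Hm) => u [Hu _]; exists u; exact: (Hu true).
Qed.

Lemma eq_jee (C : Category) (Hfc : finitely_complete C) (X Y1 Y2 Z : C) (a : Hom Y1 X) (b : Hom Y2 X)
  (h1 h2 : Hom X Z) : jointly_extremally_epic a b -> h1 ∘ a = h2 ∘ a -> h1 ∘ b = h2 ∘ b -> h1 = h2.
Proof.
move=> J Ea Eb.
case: (eq_ex Hfc h1 h2) => E [e [He [Hmono Hfac]]].
case: (Hfac _ _ Ea) => a' Ha; case: (Hfac _ _ Eb) => b' Hb.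
case: (J E e a' b' Hmono Ha Hb) => ei [_ H2].
by rewrite -(comp_id_r h1) -(comp_id_r h2) -H2 !comp_assoc He.
Qed.

Lemma rwL (C : Category) (X Y Z W : C) (f : Hom Y Z) (g : Hom X Y) (h : Hom X Z) (x : Hom W X) :
  f ∘ g = h -> f ∘ (g ∘ x) = h ∘ x.
Proof. by move=> E; rewrite comp_assoc E. Qed.

Lemma kp_in_S (C : Category) (S : Point C -> Prop) (HS : @closed_under_finite_limits (Pt C) S)
  (A B Y R : C) (fa : Hom A Y) (sa : Hom Y A) (ha : fa ∘ sa = idm Y)
  (fb : Hom B Y) (sb : Hom Y B) (hb : fb ∘ sb = idm Y)
  (phi : Hom A B) (e1 : fb ∘ phi = fa) (e2 : phi ∘ sa = sb)
  (r1 r2 : Hom R A) (HR : is_pullback phi phi r1 r2) (sR : Hom Y R)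
  (h1 : r1 ∘ sR = sa) (h2 : r2 ∘ sR = sa) (hR : (fa ∘ r1) ∘ sR = idm Y) :
  S (Build_Point fa sa ha) -> S (Build_Point fb sb hb) -> S (Build_Point (fa ∘ r1) sR hR).
Proof.
move=> Sa Sb.
set pa := Build_Point fa sa ha; set pb := Build_Point fb sb hb; set pr := Build_Point (fa ∘ r1) sR hR.
have F1 : pt_f pb ∘ phi = idm Y ∘ pt_f pa by rewrite /= comp_id_l.
have F2 : phi ∘ pt_s pa = pt_s pb ∘ idm Y by rewrite /= comp_id_r.
pose Phi := @Build_PtHom C pa pb phi (idm Y) F1 F2.
pose ob := fun j : option bool => match j with None => pb | Some _ => pa end.
pose mp := fun e : bool => match e return @Hom (Pt C) (ob (Some e)) (ob None) with true => Phi | false => Phi end.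
pose D := @Build_FinDiagram (Pt C) (option bool) bool (fun e => Some e) (fun _ => None) ob mp.
have Hc := HR.1.
have G1 : pt_f pa ∘ r1 = idm Y ∘ pt_f pr by rewrite /= comp_id_l.
have G1s : r1 ∘ pt_s pr = pt_s pa ∘ idm Y by rewrite /= comp_id_r.
have G2 : pt_f pa ∘ r2 = idm Y ∘ pt_f pr.
  by rewrite /= comp_id_l -e1 -!comp_assoc Hc.
have G2s : r2 ∘ pt_s pr = pt_s pa ∘ idm Y by rewrite /= comp_id_r.
pose L1 := @Build_PtHom C pr pa r1 (idm Y) G1 G1s.
pose L2 := @Build_PtHom C pr pa r2 (idm Y) G2 G2s.
pose LN := Pt_comp Phi L1.
pose legs := fun j : option bool => match j return @Hom (Pt C) pr (ob j) with
  None => LN | Some true => L1 | Some false => L2 end.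
apply: (HS D pr legs); first by case=> [[]|].
split.
  by case=> /=; apply: PtHom_eq => //=; rewrite ?Hc.
move=> M m Hm.
have c1 := Hm true; have c2 := Hm false; simpl in c1, c2.
have t1 := f_equal ph_top c1; have t2 := f_equal ph_top c2.
have b1 := f_equal ph_bot c1; have b2 := f_equal ph_bot c2.
simpl in t1, t2, b1, b2.
rewrite comp_id_l in b1; rewrite comp_id_l in b2.
set m1 := m (Some true) in t1 b1 *; set m2 := m (Some false) in t2 b2 *.
have Et : phi ∘ ph_top m1 = phi ∘ ph_top m2 by rewrite t1 t2.
case: HR => _ Hu.
case: (Hu _ _ _ Et) => u [[U1 U2] Uun].
have K1 : pt_f pr ∘ u = ph_bot m1 ∘ pt_f M.
  by rewrite /= -comp_assoc U1 (ph_f m1) /= ?comp_id_l.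
have K2 : u ∘ pt_s M = pt_s pr ∘ ph_bot m1.
  apply: (pb_jm (conj Hc Hu)).
    by rewrite comp_assoc U1 (ph_s m1) /= !comp_assoc h1.
  by rewrite comp_assoc U2 (ph_s m2) /= b2 -b1 !comp_assoc h2.
pose U := @Build_PtHom C M pr u (ph_bot m1) K1 K2.
exists U; split.
  case=> [[]|]; apply: PtHom_eq => //=; rewrite ?comp_id_l //.
  - by rewrite b1 -b2.
  - by rewrite -t1 -comp_assoc U1.
move=> V HV.
have v1 := f_equal ph_top (HV (Some true)); have v2 := f_equal ph_top (HV (Some false)).
have w1 := f_equal ph_bot (HV (Some true)).
simpl in v1, v2, w1.
apply: PtHom_eq => /=.
  by apply: Uun.
by rewrite -w1 comp_id_l.
Qed.

Theorem proposition6p1 (C : Category) (S : Point C -> Prop)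
  (Hfc : finitely_complete C) (HS : point_congruous S) (HM : sigma_maltsev S)
  (X1 X0 : C) (d0 d1 : Hom X1 X0) (s0 : Hom X0 X1)
  (Hd0s0 : d0 ∘ s0 = idm X0) (Hd1s0 : d1 ∘ s0 = idm X0)
  (X1' X0' : C) (d0' d1' : Hom X1' X0') (s0' : Hom X0' X1')
  (Hd0s0' : d0' ∘ s0' = idm X0') (Hd1s0' : d1' ∘ s0' = idm X0')
  (g1 : Hom X1 X1') (t1 : Hom X1' X1) (Hg1 : g1 ∘ t1 = idm X1')
  (g0 : Hom X0 X0') (t0 : Hom X0' X0) (Hg0 : g0 ∘ t0 = idm X0')
  (Hgd0 : g0 ∘ d0 = d0' ∘ g1) (Hgd1 : g0 ∘ d1 = d1' ∘ g1) (Hgs0 : g1 ∘ s0 = s0' ∘ g0)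
  (Htd0 : t0 ∘ d0' = d0 ∘ t1) (Htd1 : t0 ∘ d1' = d1 ∘ t1) (Hts0 : t1 ∘ s0' = s0 ∘ t0)
  (HSg0 : S (Build_Point g0 t0 Hg0))
  (Hpb0 : is_pullback g0 d0' d0 g1) :
  is_pullback g0 d1' d1 g1.
Proof.
case: HS => [[Hiso Hpbst] Hlim].
have jm := pb_jm Hpb0.
case: (pb_ex Hfc d1' g0) => P [pi1 [pi2 HP]].
have HPc := HP.1.
have [phi [[Hphi1 Hphi2] _]] : exists phi : Hom X1 P, (pi1 ∘ phi = g1 /\ pi2 ∘ phi = d1) /\ True.
  case: (HP.2 X1 g1 d1 (esym Hgd1)) => u [H _]; by exists u.
have [sP [HsP1 HsP2]] : exists sP : Hom X1' P, pi1 ∘ sP = idm X1' /\ pi2 ∘ sP = t0 ∘ d1'.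
  have E : d1' ∘ idm X1' = g0 ∘ (t0 ∘ d1') by rewrite comp_id_r comp_assoc Hg0 comp_id_l.
  case: (HP.2 X1' _ _ E) => u [H _]; by exists u.
have Hmono : forall W (u v : Hom W X1), phi ∘ u = phi ∘ v -> u = v.
  move=> W u v Euv.
  have HS1 : S (Build_Point g1 t1 Hg1) :=
    Hpbst (Build_Point g0 t0 Hg0) (Build_Point g1 t1 Hg1) d0' d0 HSg0 (pb_sym Hpb0) (esym Htd0).
  have HS1' : S (Build_Point pi1 sP HsP1) :=
    Hpbst (Build_Point g0 t0 Hg0) (Build_Point pi1 sP HsP1) d1' pi2 HSg0 HP HsP2.
  have e2 : phi ∘ t1 = sP.
    apply: (pb_jm HP).
      by rewrite comp_assoc Hphi1 Hg1 HsP1.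
    by rewrite comp_assoc Hphi2 HsP2 Htd1.
  case: (pb_ex Hfc phi phi) => R [r1 [r2 HR]].
  have Hc := HR.1.
  have g1r : g1 ∘ r1 = g1 ∘ r2 by rewrite -Hphi1 -!comp_assoc Hc.
  have d1r : d1 ∘ r1 = d1 ∘ r2 by rewrite -Hphi2 -!comp_assoc Hc.
  have [sR [h1 h2]] : exists sR : Hom X1' R, r1 ∘ sR = t1 /\ r2 ∘ sR = t1.
    case: (HR.2 X1' t1 t1 erefl) => x [H _]; by exists x.
  have hR : (g1 ∘ r1) ∘ sR = idm X1' by rewrite -comp_assoc h1 Hg1.
  have HSR := kp_in_S Hlim Hphi1 e2 HR h1 h2 hR HS1 HS1'.
  case: (pb_ex Hfc d0 d0) => N [n1 [n2 HN]].
  have HNc := HN.1.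
  have [tN [k1 k2]] : exists tN : Hom X1' N, n1 ∘ tN = t1 /\ n2 ∘ tN = t1.
    case: (HN.2 X1' t1 t1 erefl) => x [H _]; by exists x.
  pose g := g1 ∘ n2.
  have HgtN : g ∘ tN = idm X1' by rewrite /g -comp_assoc k2 Hg1.
  case: (pb_ex Hfc g (g1 ∘ r1)) => X' [q1 [q2 HX]].
  have HXc : g1 ∘ (n2 ∘ q1) = g1 ∘ (r1 ∘ q2) by rewrite !comp_assoc; exact: HX.1.
  have [sX [S1 S2]] : exists sX : Hom N X', q1 ∘ sX = idm N /\ q2 ∘ sX = sR ∘ g.
    have E : g ∘ idm N = (g1 ∘ r1) ∘ (sR ∘ g) by rewrite comp_id_r comp_assoc hR comp_id_l.
    case: (HX.2 N _ _ E) => x [H _]; by exists x.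
  have [tX [T1 T2]] : exists tX : Hom R X', q1 ∘ tX = tN ∘ (g1 ∘ r1) /\ q2 ∘ tX = idm R.
    have E : g ∘ (tN ∘ (g1 ∘ r1)) = (g1 ∘ r1) ∘ idm R by rewrite comp_assoc HgtN comp_id_l comp_id_r.
    case: (HX.2 R _ _ E) => x [H _]; by exists x.
  have J := HM (Build_Point (g1 ∘ r1) sR hR) HSR N g tN HgtN X' q1 q2 HX sX tX S1 S2 T1 T2.
  have Em : forall r : Hom R X1, g1 ∘ r = g1 ∘ r1 ->
      exists m : Hom X' X1, d0 ∘ m = d0 ∘ (r ∘ q2) /\ g1 ∘ m = g1 ∘ (n1 ∘ q1).
    move=> r Hr.
    have E : g0 ∘ (d0 ∘ (r ∘ q2)) = d0' ∘ (g1 ∘ (n1 ∘ q1)).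
      rewrite (rwA _ Hgd0) (rwA _ Hr) -HXc -(rwA _ Hgd0) -(rwA _ HNc) (rwA _ Hgd0) //.
    case: (Hpb0.2 X' _ _ E) => x [H _]; by exists x.
  case: (Em r1 erefl) => m1 [M1 M1'].
  case: (Em r2 (esym g1r)) => m2 [M2 M2'].
  have Hmm : d1 ∘ m1 = d1 ∘ m2.
    apply: (eq_jee Hfc J).
      rewrite -!comp_assoc; have -> : m1 ∘ sX = m2 ∘ sX.
        apply: jm.
          by rewrite !comp_assoc M1 M2 -!comp_assoc S2 (rwL _ h1) (rwL _ h2).
        by rewrite !comp_assoc M1' M2'.
      by [].
    rewrite -!comp_assoc.
    have -> : m1 ∘ tX = r1.
      apply: jm.
        by rewrite comp_assoc M1 -!comp_assoc T2 comp_id_r.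
      by rewrite comp_assoc M1' -!comp_assoc T1 (rwL _ k1) (rwI _ Hg1).
    have -> : m2 ∘ tX = r2.
      apply: jm.
        by rewrite comp_assoc M2 -!comp_assoc T2 comp_id_r.
      by rewrite comp_assoc M2' -!comp_assoc T1 (rwL _ k1) (rwI _ Hg1).
    exact: d1r.
  have [nu [nu1 nu2]] : exists nu : Hom R N, n1 ∘ nu = s0 ∘ (d0 ∘ r2) /\ n2 ∘ nu = r2.
    have E : d0 ∘ (s0 ∘ (d0 ∘ r2)) = d0 ∘ r2 by rewrite (rwI _ Hd0s0).
    case: (HN.2 R _ _ E) => x [H _]; by exists x.
  have [z [z1 z2]] : exists z : Hom R X', q1 ∘ z = nu /\ q2 ∘ z = idm R.
    have E : g ∘ nu = (g1 ∘ r1) ∘ idm R by rewrite /g -comp_assoc nu2 comp_id_r g1r.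
    case: (HX.2 R _ _ E) => x [H _]; by exists x.
  have Ez : forall m r, d0 ∘ m = d0 ∘ (r ∘ q2) -> g1 ∘ m = g1 ∘ (n1 ∘ q1) -> g1 ∘ r = g1 ∘ r1 ->
      m ∘ z = s0 ∘ (d0 ∘ r).
    move=> m r Hm1 Hm2 Hr.
    apply: jm.
      by rewrite comp_assoc Hm1 -!comp_assoc z2 comp_id_r (rwI _ Hd0s0).
    rewrite comp_assoc Hm2 -!comp_assoc z1 nu1 (rwA _ Hgs0) (rwA _ Hgd0) (rwA _ Hgs0) (rwA _ Hgd0).
    by rewrite Hr g1r.
  have Hd0r : d0 ∘ r1 = d0 ∘ r2.
    rewrite -(rwI (d0 ∘ r1) Hd1s0) -(rwI (d0 ∘ r2) Hd1s0).
    rewrite -(Ez m1 r1 M1 M1' erefl) -(Ez m2 r2 M2 M2' (esym g1r)).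
    by rewrite !comp_assoc Hmm.
  case: (HR.2 W u v Euv) => w [[W1 W2] _].
  apply: jm.
    by rewrite -W1 -W2 !comp_assoc Hd0r.
  by rewrite -Hphi1 -!comp_assoc Euv.
have Hiso_phi : is_iso phi.
  have A1 : pi1 ∘ (phi ∘ t1) = idm X1' by rewrite comp_assoc Hphi1 Hg1.
  have A2 : pi2 ∘ (phi ∘ t1) = t0 ∘ d1' by rewrite comp_assoc Hphi2 Htd1.
  have A3 : pi1 ∘ (phi ∘ s0) = s0' ∘ g0 by rewrite comp_assoc Hphi1 Hgs0.
  have A4 : pi2 ∘ (phi ∘ s0) = idm X0 by rewrite comp_assoc Hphi2 Hd1s0.
  have J := HM (Build_Point g0 t0 Hg0) HSg0 X1' d1' s0' Hd1s0' P pi1 pi2 HP _ _ A1 A2 A3 A4.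
  by apply: (J X1 phi t1 s0).
case: Hiso_phi => psi [Hpsi1 Hpsi2].
split; first by [].
move=> Q q1 q2 E.
case: (HP.2 Q q2 q1 (esym E)) => w [[W1 W2] Wun].
exists (psi ∘ w); split.
  by split; [rewrite -Hphi2 | rewrite -Hphi1]; rewrite -comp_assoc (comp_assoc phi) Hpsi2 comp_id_l.
move=> v V1 V2.
rewrite -(Wun (phi ∘ v)); first by rewrite comp_assoc Hpsi1 comp_id_l.
  by rewrite comp_assoc Hphi1.
by rewrite comp_assoc Hphi2.
Qed.
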